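(* Let $m\in\mathbb{N}$ and let $\mathcal{P}_m$ be the set of all functions of the form $$p(z)=ib+\sum_{j=1}^m a_j\frac{s_j+z}{s_j-z},\quad z\in\mathbb{D},$$ where $b\in\mathbb{R}$, $a_1,\dots,a_m>0$, and $s_1,\dots,s_m$ are pairwise distinct points of $\partial\mathbb{D}$. Then $p\mapsto1/p$ is an involution of $\mathcal{P}_m$ onto itself.
   Context: $\mathbb{D}$ denotes the open unit disk. *)

(* Defs.v *)
From HB Require Import structures.
From mathcomp Require Import all_boot all_order all_algebra.
From mathcomp Require Import complex.
Set Implicit Arguments. Unset Strict Implicit. Unset Printing Implicit Defensive.
Import Order.TTheory GRing.Theory Num.Theory.
Local Open Scope ring_scope.
Local Open Scope complex_scope.

Definition in_disk (R : rcfType) (z : R[i]) : Prop := `|z| < 1.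

Definition in_Pm (R : rcfType) (m : nat) (p : R[i] -> R[i]) : Prop :=
  exists (b : R) (a : 'I_m -> R) (s : 'I_m -> R[i]),
    (forall j, 0 < a j) /\ (forall j, `|s j| = 1) /\ injective s /\
    (forall z, in_disk z ->
       p z = 'i * b%:C + \sum_(j < m) (a j)%:C * ((s j + z) / (s j - z))).

(* Main.v *)
Require Import Defs.
From HB Require Import structures.
From mathcomp Require Import all_boot all_order all_algebra.
From mathcomp Require Import complex.
From mathcomp Require Import ring lra zify.
Set Implicit Arguments. Unset Strict Implicit. Unset Printing Implicit Defensive.
Import Order.TTheory GRing.Theory Num.Theory.
Local Open Scope ring_scope.
Local Open Scope complex_scope.

Section Main.
Variable R : rcfType.
Local Notation C := R[i].

Definition PS n (s : 'I_n -> C) : {poly C} := \prod_(j < n) ('X - (s j)%:P).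
Definition PSj n (s : 'I_n -> C) j : {poly C} := \prod_(k < n | k != j) ('X - (s k)%:P).
Definition Npol n (c : C) (a s : 'I_n -> C) : {poly C} :=
  c%:P * PS s - \sum_(j < n) (2 * a j * s j)%:P * PSj s j.

Lemma PS_split n (s : 'I_n -> C) j z : (PS s).[z] = (z - s j) * (PSj s j).[z].
Proof.
by rewrite /PS /PSj !horner_prod (bigD1 j) //= hornerXsubC.
Qed.

Lemma evalF n (c : C) (a s : 'I_n -> C) z : (forall j, z != s j) ->
  (Npol (c - \sum_(j < n) a j) a s).[z] =
  (PS s).[z] * (c + \sum_(j < n) a j * ((s j + z) / (s j - z))).
Proof.
move=> hz; rewrite /Npol hornerD hornerN hornerM hornerC horner_sum mulrDr.
rewrite mulr_sumr mulrBl mulr_suml -addrA; congr (_ + _); first exact: mulrC.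
rewrite -sumrN -sumrB; apply: eq_bigr => j _.
rewrite hornerM hornerC (PS_split s j).
have : s j - z != 0 by rewrite subr_eq0 eq_sym hz.
move=> h; field.
exact: h.
Qed.

Lemma size_ie n : size (index_enum 'I_n) = n.
Proof.
by rewrite -[index_enum _]filter_predT deprecated_filter_index_enum -cardE card_ord.
Qed.

Lemma size_PS n (s : 'I_n -> C) : size (PS s) = n.+1.
Proof. by rewrite /PS size_prod_XsubC size_ie. Qed.

Lemma monic_PS n (s : 'I_n -> C) : PS s \is monic.
Proof. exact: monic_prod_XsubC. Qed.

Lemma PS_splitP n (s : 'I_n -> C) j : PS s = ('X - (s j)%:P) * PSj s j.
Proof. by rewrite /PS /PSj (bigD1 j). Qed.

Lemma size_PSj n (s : 'I_n -> C) j : (size (PSj s j) <= n)%N.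
Proof.
have := size_PS s; rewrite (PS_splitP s j) size_Mmonic ?polyXsubC_eq0 ?size_XsubC //.
  by move=> h; lia.
exact: monic_prod_XsubC.
Qed.

Lemma size_sum_le n (F : 'I_n -> {poly C}) k :
  (forall j, size (F j) <= k)%N -> (size (\sum_(j < n) F j)%R <= k)%N.
Proof.
move=> h; apply: (big_ind (fun p : {poly C} => size p <= k)%N).
- by rewrite size_poly0.
- by move=> p q hp hq; rewrite (leq_trans (size_polyD _ _)) // geq_max hp hq.
- by move=> j _; apply: h.
Qed.

Lemma size_Npol n (c : C) (a s : 'I_n -> C) : c != 0 ->
  size (Npol c a s) = n.+1 /\ lead_coef (Npol c a s) = c.
Proof.
move=> hc.
have h1 : size (c%:P * PS s) = n.+1 by rewrite mul_polyC size_scale // size_PS.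
have h2 : (size (- \sum_(j < n) (2 * a j * s j)%:P * PSj s j)%R < n.+1)%N.
  rewrite size_polyN ltnS; apply: size_sum_le => j.
  by rewrite mul_polyC (leq_trans (size_scale_leq _ _)) // size_PSj.
rewrite /Npol; split; first by rewrite size_polyDl h1.
by rewrite lead_coefDl ?h1 // mul_polyC lead_coefZ (monicP (monic_PS s)) mulr1.
Qed.

Lemma size_monic_sub (p q : {poly C}) n : p \is monic -> q \is monic ->
  size p = n.+1 -> size q = n.+1 -> (size (p - q)%R <= n)%N.
Proof.
move=> mp mq sp sq.
have hle : (size (p - q)%R <= n.+1)%N.
  by rewrite (leq_trans (size_polyD _ _)) // size_polyN sp sq maxnn.
rewrite leqNgt; apply/negP => hgt.
have e : size (p - q) = n.+1 by apply/eqP; rewrite eqn_leq hle hgt.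
have : lead_coef (p - q) != 0 by rewrite lead_coef_eq0 -size_poly_eq0 e.
rewrite /lead_coef e /= coefB.
have -> : p`_n = 1 by move/monicP: mp; rewrite /lead_coef sp.
have -> : q`_n = 1 by move/monicP: mq; rewrite /lead_coef sq.
by rewrite subrr eqxx.
Qed.

Lemma poly_many (P : {poly C}) : (forall z : C, 1 < `|z| -> P.[z] = 0) -> P = 0.
Proof.
move=> h.
apply: (@roots_geq_poly_eq0 _ P [seq (k.+2)%:R : C | k <- iota 0 (size P)]).
- apply/allP => x /mapP [k _ ->]; apply/rootP/h.
  by rewrite normr_nat ltr1n.
- rewrite map_inj_uniq ?iota_uniq // => i j /eqP; rewrite eqr_nat => /eqP [].
  done.
- by rewrite size_map size_iota.
Qed.


Lemma conj_i : ('i : C)^*%C = - 'i.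
Proof. by apply/eqP; rewrite eq_complex /= oppr0 !eqxx. Qed.

Lemma conjcD (x y : C) : (x + y)^*%C = x^*%C + y^*%C. Proof. exact: rmorphD. Qed.
Lemma conjcB (x y : C) : (x - y)^*%C = x^*%C - y^*%C. Proof. exact: rmorphB. Qed.
Lemma conjcM (x y : C) : (x * y)^*%C = x^*%C * y^*%C. Proof. exact: rmorphM. Qed.
Lemma conjc_sum n (F : 'I_n -> C) : (\sum_(j < n) F j)^*%C = \sum_(j < n) (F j)^*%C.
Proof. exact: rmorph_sum. Qed.

Lemma conj_ib (b : R) : ('i * b%:C : C)^*%C = - ('i * b%:C).
Proof. by apply/eqP; rewrite eq_complex /= !(mul0r, mulr0, mul1r, subrr, sub0r, subr0, add0r, addr0, oppr0, eqxx). Qed.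

Lemma conj_unit (s : C) : `|s| = 1 -> s^*%C = s^-1.
Proof.
move=> hs; have h : s * s^*%C = 1 by rewrite -sqr_normc hs expr1n.
have s0 : s != 0 by rewrite -normr_eq0 hs oner_eq0.
by rewrite -[s^*%C]mul1r -(mulVf s0) -mulrA h mulr1.
Qed.

Lemma conj_div (x y : C) : (x / y)^*%C = x^*%C / y^*%C.
Proof. by rewrite rmorphM fmorphV. Qed.

Lemma re_term (s z : C) : `|s| = 1 -> s != z ->
  (s + z) / (s - z) + ((s + z) / (s - z))^*%C = 2 * (1 - `|z| ^+ 2) / `|s - z| ^+ 2.
Proof.
move=> hs hsz.
have s0 : s != 0 by rewrite -normr_eq0 hs oner_eq0.
have d0 : s - z != 0 by rewrite subr_eq0.
have d1 : (s - z)^*%C != 0 by rewrite conjc_eq0.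
rewrite conj_div !sqr_normc !rmorphB !rmorphD /= (conj_unit hs).
move: d1; rewrite rmorphB /= (conj_unit hs) => d1.
have d2 : 1 - z^*%C * s != 0.
  by have := mulf_neq0 s0 d1; rewrite mulrBr mulfV // [s * _]mulrC.
field.
by rewrite s0 d0 andbT /= mulNr; exact: d2.
Qed.

Definition Fv n (b : R) (a : 'I_n -> R) (s : 'I_n -> C) (z : C) : C :=
  'i * b%:C + \sum_(j < n) (a j)%:C * ((s j + z) / (s j - z)).

Definition Sg n (a : 'I_n -> R) (s : 'I_n -> C) (z : C) : C :=
  \sum_(j < n) 2 * (a j)%:C / `|s j - z| ^+ 2.

Lemma F_re n b (a : 'I_n -> R) s z : (forall j, `|s j| = 1) -> (forall j, s j != z) ->
  Fv b a s z + (Fv b a s z)^*%C = (1 - `|z| ^+ 2) * Sg a s z.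
Proof.
move=> hs hz; rewrite /Fv /Sg conjcD conj_ib conjc_sum.
rewrite mulr_sumr addrACA addrN add0r -big_split /=; apply: eq_bigr => j _.
rewrite conjcM conjc_real -mulrDr re_term //; field.
have : `|s j - z| != 0 by rewrite normr_eq0 subr_eq0 hz.
by [].
Qed.

Lemma Sg_pos n (a : 'I_n -> R) s z : (0 < n)%N -> (forall j, 0 < a j) ->
  (forall j, s j != z) -> 0 < Sg a s z.
Proof.
case: n a s => // n a s _ ha hz; rewrite /Sg (bigD1 ord0) //=.
have hpos : forall j, 0 < 2 * (a j)%:C / `|s j - z| ^+ 2.
  move=> j; apply: divr_gt0; first apply: mulr_gt0.
  - by rewrite ltr0n.
  - by rewrite ltcR.
  - by apply: exprn_gt0; rewrite normr_gt0 subr_eq0.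
apply: (lt_le_trans (hpos ord0)); rewrite lerDl.
by apply: sumr_ge0 => j _; apply: ltW.
Qed.


Lemma pos_real (x : C) : 0 < x -> x = (complex.Re x)%:C /\ 0 < complex.Re x.
Proof.
case: x => x y; rewrite ltcE /= => /andP [/eqP hy hx]; split => //; by rewrite hy.
Qed.

Lemma sum_gt0 n (f : 'I_n -> R) : (0 < n)%N -> (forall j, 0 < f j) -> 0 < \sum_(j < n) f j.
Proof.
case: n f => // n f _ hf; rewrite (bigD1 ord0) //=.
apply: (lt_le_trans (hf ord0)); rewrite lerDl.
by apply: sumr_ge0 => j _; apply: ltW.
Qed.


Lemma PSj_at n (t : 'I_n -> C) l k : l != k -> (PSj t l).[t k] = 0.
Proof.
move=> hlk; rewrite /PSj horner_prod (bigD1 k) /=; last by rewrite eq_sym.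
by rewrite hornerXsubC subrr mul0r.
Qed.

Lemma PS_at n (t : 'I_n -> C) k : (PS t).[t k] = 0.
Proof. by rewrite (PS_split t k) subrr mul0r. Qed.

Lemma unit_neq0 (x : C) : `|x| = 1 -> x != 0.
Proof. by move=> h; rewrite -normr_eq0 h oner_eq0. Qed.

Lemma two_neq0 : (2 : C) != 0.
Proof. by rewrite pnatr_eq0. Qed.

Lemma imag_of (x : C) : x^*%C = - x -> x = 'i * (complex.Im x)%:C.
Proof.
case: x => p q /= /eqP; rewrite eq_complex /= => /andP [/eqP hp _].
have p0 : p = 0.
  by lra.
apply/eqP; rewrite eq_complex /= p0.
by rewrite !(mul0r, mulr0, mul1r, subrr, sub0r, subr0, add0r, addr0, oppr0, eqxx).
Qed.

Section Construction.
Variables (m : nat) (b : R) (a : 'I_m -> R) (s : 'I_m -> C).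
Hypotheses (hm : (0 < m)%N) (ha : forall j, 0 < a j) (hs : forall j, `|s j| = 1)
  (hinj : injective s).

Local Notation ac := (fun j => (a j)%:C).
Local Notation A := (\sum_(j < m) a j).
Local Notation lc := ('i * b%:C - A%:C : C).
Local Notation N := (Npol lc ac s).

Lemma A_gt0 : 0 < A.
Proof. exact: sum_gt0. Qed.

Lemma lc_neq0 : lc != 0.
Proof.
apply/negP => /eqP h.
have h1 : 'i * b%:C = A%:C by apply/eqP; rewrite -subr_eq0 h.
have h2 := f_equal conjc h1.
rewrite conj_ib conjc_real in h2.
have h3 : (A + A)%:C = 0 by rewrite rmorphD /= -{1}h2 h1 addNr.
move/eqP: h3; rewrite fmorph_eq0; apply/negP.
by rewrite gt_eqF // addr_gt0 // A_gt0.
Qed.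

Lemma N_eval z : (forall j, z != s j) -> N.[z] = (PS s).[z] * Fv b a s z.
Proof.
move=> hz; have := @evalF m ('i * b%:C) ac s z hz.
by rewrite rmorph_sum.
Qed.

Lemma N_size : size N = m.+1 /\ lead_coef N = lc.
Proof. exact: size_Npol lc_neq0. Qed.

Lemma ac_neq0 j : ac j != 0.
Proof. by rewrite fmorph_eq0 gt_eqF. Qed.

Lemma N_at_s j : N.[s j] != 0.
Proof.
rewrite /Npol hornerD hornerN hornerM hornerC PS_at mulr0 add0r horner_sum.
rewrite (bigD1 j) //= big1 => [|i hi]; last by rewrite hornerM PSj_at ?mulr0.
rewrite addr0 oppr_eq0 hornerM hornerC mulf_neq0 //.
  by rewrite !mulf_neq0 ?two_neq0 ?ac_neq0 ?unit_neq0.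
rewrite /PSj horner_prod; apply/prodf_neq0 => k hk.
by rewrite hornerXsubC subr_eq0 (inj_eq hinj) eq_sym.
Qed.

Lemma N_roots : exists t : 'I_m -> C, N = lc *: PS t.
Proof.
have [rs hrs] := closed_field_poly_normal N.
have [hsz hlc] := N_size; rewrite hlc in hrs.
have hrsz : size rs = m.
  have := hsz; rewrite hrs size_scale ?lc_neq0 // size_prod_XsubC.
  by move=> [].
exists (fun k => nth 0 rs k); rewrite {1}hrs /PS (big_nth 0) hrsz big_mkord.
done.
Qed.

Lemma PS_neq0 n (t : 'I_n -> C) z : (forall j, z != t j) -> (PS t).[z] != 0.
Proof.
move=> hz; rewrite /PS horner_prod; apply/prodf_neq0 => k _.
by rewrite hornerXsubC subr_eq0.
Qed.

Section Roots.
Variable t : 'I_m -> C.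
Hypothesis ht : N = lc *: PS t.

Lemma t_root k : N.[t k] = 0.
Proof. by rewrite ht hornerZ PS_at mulr0. Qed.

Lemma t_neq_s k j : t k != s j.
Proof. by apply/eqP => e; have := N_at_s j; rewrite -e t_root eqxx. Qed.

Lemma t_unit k : `|t k| = 1.
Proof.
have e := @N_eval (t k) (fun j => t_neq_s k j); rewrite t_root in e.
have hF : Fv b a s (t k) = 0.
  move/eqP: e; rewrite eq_sym mulf_eq0 (negbTE (PS_neq0 (fun j => t_neq_s k j))) /=.
  by move/eqP.
have hne : forall j, s j != t k by move=> j; rewrite eq_sym t_neq_s.
have hre := @F_re m b a s (t k) hs hne.
rewrite hF conjc0 addr0 in hre.
have hS := Sg_pos hm ha hne.
have h1 : 1 - `|t k| ^+ 2 = 0.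
  by apply/eqP; move/eqP: hre; rewrite eq_sym mulf_eq0 (gt_eqF hS) orbF.
apply/eqP; rewrite -sqrp_eq1 //; apply/eqP.
by move/eqP: h1; rewrite subr_eq0 => /eqP <-.
Qed.

Lemma Fv_t k : Fv b a s (t k) = 0.
Proof.
have e := @N_eval (t k) (fun j => t_neq_s k j); rewrite t_root in e.
move/eqP: e; rewrite eq_sym mulf_eq0 (negbTE (PS_neq0 (fun j => t_neq_s k j))) /=.
by move/eqP.
Qed.

Definition Gk k z := \sum_(j < m) ac j * (2 * s j / ((s j - z) * (s j - t k))).
Definition Hk k : {poly C} :=
  - \sum_(j < m) (ac j * 2 * s j / (s j - t k))%:P * PSj s j.

Lemma F_diff k z : (forall j, z != s j) -> Fv b a s z = (z - t k) * Gk k z.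
Proof.
move=> hz; rewrite -[Fv b a s z]subr0 -(Fv_t k) /Fv /Gk opprD addrACA subrr add0r.
rewrite -sumrB mulr_sumr; apply: eq_bigr => j _.
have h1 : s j - z != 0 by rewrite subr_eq0 eq_sym.
have h2 : s j - t k != 0 by rewrite subr_eq0 eq_sym t_neq_s.
field.
by rewrite h1 h2.
Qed.

Lemma PS_G k z : (forall j, z != s j) -> (PS s).[z] * Gk k z = (Hk k).[z].
Proof.
move=> hz; rewrite /Hk /Gk hornerN horner_sum mulr_sumr -sumrN; apply: eq_bigr => j _.
rewrite hornerM hornerC (PS_split s j).
have h1 : s j - z != 0 by rewrite subr_eq0 eq_sym.
have h2 : s j - t k != 0 by rewrite subr_eq0 eq_sym t_neq_s.
field.
by rewrite h1 h2.
Qed.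

Lemma lcE k : lc *: PSj t k = Hk k.
Proof.
apply/subr0_eq; apply: poly_many => z hz.
have hzs : forall j, z != s j.
  by move=> j; apply/eqP => e; move: hz; rewrite e hs ltxx.
have hzt : z - t k != 0.
  by rewrite subr_eq0; apply/eqP => e; move: hz; rewrite e t_unit ltxx.
have e1 := N_eval hzs.
rewrite (F_diff k hzs) mulrCA (PS_G k hzs) {1}ht hornerZ (PS_split t k) in e1.
rewrite hornerD hornerN hornerZ; apply/eqP; rewrite subr_eq0; apply/eqP.
apply: (mulfI hzt); by rewrite mulrCA e1.
Qed.

Lemma tG_term (u v : C) (c : C) : `|u| = 1 -> `|v| = 1 -> u != v ->
  v * (c * (2 * u / ((u - v) * (u - v)))) = - (2 * c / `|u - v| ^+ 2).
Proof.
move=> hu hv huv.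
have u0 := unit_neq0 hu; have v0 := unit_neq0 hv.
have d0 : u - v != 0 by rewrite subr_eq0.
have d1 : u * v * (u - v) ^+ 2 != 0 by rewrite !mulf_neq0 // expf_neq0.
rewrite sqr_normc conjcB (conj_unit hu) (conj_unit hv).
have -> : (u - v) * (u^-1 - v^-1) = - ((u - v) ^+ 2 / (u * v)).
  by field; rewrite u0 v0.
field.
by rewrite u0 v0 d0.
Qed.

Lemma tG k : t k * Gk k (t k) = - Sg a s (t k).
Proof.
rewrite /Gk /Sg mulr_sumr -sumrN; apply: eq_bigr => j _.
by rewrite tG_term // ?t_unit // eq_sym t_neq_s.
Qed.

Lemma key k : lc * (PSj t k).[t k] = (PS s).[t k] * (- Sg a s (t k) / t k).
Proof.
have htk : forall j, t k != s j by move=> j; apply: t_neq_s.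
rewrite -hornerZ lcE -(PS_G k htk); congr (_ * _).
have t0 : t k != 0 by apply: unit_neq0; apply: t_unit.
by rewrite -tG mulrC mulKf.
Qed.

Lemma Sg_t_pos k : 0 < Sg a s (t k).
Proof. by apply: Sg_pos => // j; rewrite eq_sym t_neq_s. Qed.

Lemma t_inj : injective t.
Proof.
move=> k l e; apply/eqP; apply/negPn/negP => hkl.
have := key k; rewrite [X in (PSj t k).[X]]e PSj_at // mulr0 => /esym /eqP.
rewrite mulf_eq0 (negbTE (PS_neq0 (fun j => t_neq_s k j))) /= mulf_eq0 invr_eq0.
rewrite oppr_eq0 (gt_eqF (Sg_t_pos k)) /=.
by rewrite (negbTE (unit_neq0 (t_unit k))).
Qed.

Definition ap k : C := (2 * Sg a s (t k))^-1.
Definition Ap := \sum_(k < m) ap k.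
Definition w := Ap + lc^-1.
Definition M := Npol (w - Ap) ap t.

Lemma wA : w - Ap = lc^-1.
Proof. by rewrite /w addrAC subrr add0r. Qed.

Lemma M_eval z : (forall k, z != t k) ->
  M.[z] = (PS t).[z] * (w + \sum_(k < m) ap k * ((t k + z) / (t k - z))).
Proof. by move=> hz; rewrite /M /Ap evalF. Qed.

Lemma M_at k : lc * M.[t k] = (PS s).[t k].
Proof.
rewrite /M /Npol hornerD hornerN hornerM hornerC PS_at mulr0 add0r horner_sum.
rewrite [X in _ * - X](bigD1 k) //= [\sum_(i < m | i != k) _]big1 ?addr0; last first.
  by move=> l hl; rewrite hornerM PSj_at ?mulr0.
rewrite hornerM hornerC mulrN mulrCA key.
have t0 : t k != 0 by apply: unit_neq0; apply: t_unit.
have S0 : Sg a s (t k) != 0 by rewrite gt_eqF // Sg_t_pos.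
rewrite /ap; field.
by rewrite t0 S0.
Qed.

Lemma lcM : lc *: M = PS s.
Proof.
apply/subr0_eq.
apply: (@roots_geq_poly_eq0 _ _ [seq t k | k <- enum 'I_m]).
- apply/allP => x /mapP [k _ ->]; apply/rootP.
  by rewrite hornerD hornerN hornerZ M_at subrr.
- by rewrite map_inj_uniq ?enum_uniq //; apply: t_inj.
- rewrite size_map size_enum_ord; apply: size_monic_sub.
  + apply/monicP; rewrite lead_coefZ (size_Npol _ _ _).2 ?wA ?mulfV ?lc_neq0 //.
    by rewrite invr_eq0 lc_neq0.
  + exact: monic_PS.
  + rewrite size_scale ?lc_neq0 // (size_Npol _ _ _).1 // wA invr_eq0 lc_neq0 //.
  + exact: size_PS.
Qed.

Lemma inv_id z : `|z| < 1 ->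
  Fv b a s z * (w + \sum_(k < m) ap k * ((t k + z) / (t k - z))) = 1.
Proof.
move=> hz.
have hzs : forall j, z != s j.
  by move=> j; apply/eqP => e; move: hz; rewrite e hs ltxx.
have hzt : forall k, z != t k.
  by move=> k; apply/eqP => e; move: hz; rewrite e t_unit ltxx.
apply: (mulfI (PS_neq0 hzs)); apply: (mulfI (PS_neq0 hzt)); rewrite mulr1.
transitivity ((PS s).[z] * Fv b a s z *
   ((PS t).[z] * (w + \sum_(k < m) ap k * ((t k + z) / (t k - z))))); first by ring.
rewrite -N_eval // -M_eval // ht hornerZ -mulrA mulrCA -hornerZ lcM.
by [].
Qed.

Lemma ap_pos k : 0 < ap k.
Proof. by rewrite /ap invr_gt0 mulr_gt0 ?ltr0n ?Sg_t_pos. Qed.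

Lemma Ap_conj : Ap^*%C = Ap.
Proof.
rewrite /Ap conjc_sum; apply: eq_bigr => k _.
by rewrite {1}(pos_real (ap_pos k)).1 conjc_real -(pos_real (ap_pos k)).1.
Qed.

Lemma w_conj : w^*%C = - w.
Proof.
have h0 := inv_id (z := 0).
rewrite normr0 ltr01 in h0; have {}h0 := h0 isT.
have e1 : Fv b a s 0 = 'i * b%:C + A%:C.
  rewrite /Fv rmorph_sum; congr (_ + _); apply: eq_bigr => j _.
  by rewrite addr0 subr0 divff ?mulr1 // unit_neq0.
have e2 : \sum_(k < m) ap k * ((t k + 0) / (t k - 0)) = Ap.
  rewrite /Ap; apply: eq_bigr => k _.
  by rewrite addr0 subr0 divff ?mulr1 // unit_neq0 // t_unit.
rewrite e1 e2 in h0.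
have h1 := mulr1_eq h0.
rewrite /w conjcD Ap_conj conjc_inv conjcB conj_ib conjc_real -opprD invrN h1.
by rewrite /w; ring.
Qed.

End Roots.
End Construction.

Lemma inPm_inv m (hm : (0 < m)%N) (p : C -> C) : in_Pm m p ->
  (forall z, in_disk z -> p z != 0) /\ in_Pm m (fun z => (p z)^-1).
Proof.
move=> [b [a [s [ha [hs [hinj hp]]]]]].
have [t ht] := N_roots b s hm ha.
have hid := inv_id hm ha hs hinj ht.
split.
  move=> z hz; rewrite hp //; apply/negP => /eqP e.
  by have := hid _ hz; rewrite /Fv e mul0r => /eqP; rewrite eq_sym oner_eq0.
exists (complex.Im (w b a s t)), (fun k => complex.Re (ap a s t k)), t.
split; first by move=> k; exact: (pos_real (ap_pos hm ha hs hinj ht k)).2.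
split; first exact: (t_unit hm ha hs hinj ht).
split; first exact: (t_inj hm ha hs hinj ht).
move=> z hz; rewrite hp // (mulr1_eq (hid _ hz)).
rewrite {1}(imag_of (w_conj hm ha hs hinj ht)); congr (_ + _).
apply: eq_bigr => k _; congr (_ * _).
exact: (pos_real (ap_pos hm ha hs hinj ht k)).1.
Qed.

End Main.

Unset Implicit Arguments.

Theorem lemma6p13 (R : rcfType) (m : nat) (hm : (0 < m)%N) :
  (forall p, @in_Pm R m p ->
     (forall z, @in_disk R z -> p z != 0) /\ @in_Pm R m (fun z => (p z)^-1)) /\
  (forall p, @in_Pm R m p -> forall z, @in_disk R z -> ((p z)^-1)^-1 = p z) /\
  (forall q, @in_Pm R m q -> exists p, @in_Pm R m p /\
     forall z : R[i], @in_disk R z -> (p z)^-1 = q z).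
Proof.
split; first by move=> p hp; apply: inPm_inv.
split; first by move=> p _ z _; rewrite invrK.
move=> q hq; exists (fun z => (q z)^-1); split; first exact: (inPm_inv hm hq).2.
by move=> z _; rewrite invrK.
Qed.
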